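(* For every positive integer $m$, the line graph $L(K_{2m+1})$ of the complete graph on $2m+1$ vertices is a core, i.e. every endomorphism of $L(K_{2m+1})$ is an automorphism.
   Context: An endomorphism of a graph $X$ is a map $f:V(X)\to V(X)$ such that adjacent vertices are mapped to adjacent vertices; $X$ is a core if all its endomorphisms are automorphisms. *)

(* Defs.v *)
From mathcomp Require Import all_boot.
Set Implicit Arguments. Unset Strict Implicit. Unset Printing Implicit Defensive.

Definition is_endomorphism (V : finType) (adj : rel V) (f : V -> V) : Prop :=
  forall x y, adj x y -> adj (f x) (f y).

Definition is_automorphism (V : finType) (adj : rel V) (f : V -> V) : Prop :=
  bijective f /\ forall x y, adj (f x) (f y) = adj x y.

Definition is_core (V : finType) (adj : rel V) : Prop :=
  forall f : V -> V, is_endomorphism adj f -> is_automorphism adj f.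

(* Vertices of the line graph L(K_n): the edges of K_n, i.e. the
   2-element subsets of the vertex set 'I_n. *)
Definition edgeK (n : nat) := {e : {set 'I_n} | #|e| == 2}.

Definition lineK_adj (n : nat) : rel (edgeK n) :=
  fun e f => (e != f) && ~~ [disjoint val e & val f].

(* Main.v *)
Require Import Defs.
From mathcomp Require Import all_boot.
Set Implicit Arguments. Unset Strict Implicit. Unset Printing Implicit Defensive.

Lemma endo_inj_auto (V : finType) (adj : rel V) (f : V -> V) :
  is_endomorphism adj f -> injective f -> is_automorphism adj f.
Proof.
move=> hf finj; split; first exact: injF_bij.
move=> x y; apply/idP/idP; last exact: hf.
move=> hxy.
pose A := [set p : V * V | adj p.1 p.2].
pose F := fun p : V * V => (f p.1, f p.2).
have Finj : injective F by move=> [a b] [c d] [/finj -> /finj ->].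
have sub : F @: A \subset A.
  apply/subsetP => _ /imsetP [[a b] Hab ->]; rewrite !inE /=; apply: hf.
  by move: Hab; rewrite inE.
have eqA : F @: A = A.
  by apply/eqP; rewrite eqEcard sub (card_imset _ Finj) leqnn.
have : (f x, f y) \in F @: A by rewrite eqA inE.
case/imsetP => [[a b] Hab [ea eb]].
by move: Hab; rewrite inE /= (finj _ _ ea) (finj _ _ eb).
Qed.

Lemma edge_card n (e : edgeK n) : #|val e| = 2.
Proof. by apply/eqP; exact: valP e. Qed.

Lemma pair_eq (T : finType) (A : {set T}) x y :
  #|A| = 2 -> x \in A -> y \in A -> x != y -> A = [set x; y].
Proof.
move=> hA hx hy hxy; apply/eqP; rewrite eq_sym eqEcard hA cards2 hxy leqnn andbT.
by apply/subsetP => z; rewrite !inE => /orP [] /eqP ->.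
Qed.

Lemma two_other (T : finType) (A : {set T}) x :
  #|A| = 2 -> x \in A -> exists2 y, y != x & A = [set x; y].
Proof.
move=> /eqP /cards2P [a [b [ab ->]]]; rewrite !inE => /orP [] /eqP ->.
  by exists b; rewrite // eq_sym.
by exists a; rewrite // setUC.
Qed.

Lemma meet (T : finType) (A B : {set T}) :
  ~~ [disjoint A & B] -> exists2 x, x \in A & x \in B.
Proof. by rewrite -setI_eq0 => /set0Pn [x]; rewrite inE => /andP [] ; exists x. Qed.

Lemma card3 (T : finType) (a b c : T) : #|[set a; b; c]| <= 3.
Proof.
rewrite (leq_trans (leq_card_setU _ _)) // (leq_trans (leq_add (leq_card_setU _ _) (leqnn _))) //.
by rewrite !cards1.
Qed.

Lemma clique_star n (K : {set edgeK n}) :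
  (forall x y, x \in K -> y \in K -> x != y -> ~~ [disjoint val x & val y]) ->
  3 < #|K| -> exists w, forall e, e \in K -> w \in val e.
Proof.
move=> hK hcard.
have [a aK] : exists a, a \in K by apply/set0Pn; rewrite -card_gt0 (ltn_trans _ hcard).
case/cards2P: (valP a) => p [q [pq ea]].
case: (boolP [forall e in K, p \in val e]) => [/forall_inP hp|]; first by exists p.
rewrite negb_forall_in => /exists_inP [b bK pb].
case: (boolP [forall e in K, q \in val e]) => [/forall_inP hq|]; first by exists q.
rewrite negb_forall_in => /exists_inP [c cK qc].
exfalso.
have ab : a != b by apply: contraNneq pb => <-; rewrite ea !inE eqxx.
have ac : a != c by apply: contraNneq qc => <-; rewrite ea !inE eqxx orbT.
have qb : q \in val b.
  case/meet: (hK _ _ aK bK ab) => x; rewrite ea !inE => /orP [] /eqP -> // hx.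
  by rewrite hx in pb.
have pc : p \in val c.
  case/meet: (hK _ _ aK cK ac) => x; rewrite ea !inE => /orP [] /eqP -> // hx.
  by rewrite hx in qc.
have [r rq eb] := two_other (edge_card b) qb.
have bc : b != c by apply: contraNneq qc => <-.
have rc : r \in val c.
  case/meet: (hK _ _ bK cK bc) => x; rewrite eb !inE => /orP [] /eqP -> // hx.
  by rewrite hx in qc.
have rp : r != p by apply: contraNneq pb => <-; rewrite eb !inE eqxx orbT.
have ec : val c = [set p; r] by apply: pair_eq (edge_card c) pc rc _; rewrite eq_sym.
have sub : K \subset [set a; b; c].
  apply/subsetP => d dK; rewrite !inE.
  case: (eqVneq d a) => [//|da].
  case: (eqVneq d b) => [|db]; first by rewrite ?orbT.
  case: (eqVneq d c) => [|dc]; first by rewrite ?orbT.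
  exfalso.
  case/meet: (hK _ _ dK aK da) => x xd; rewrite ea !inE => /orP [] /eqP ex; subst x.
  - case/meet: (hK _ _ dK bK db) => y yd; rewrite eb !inE => /orP [] /eqP ey; subst y.
    + have : d = a by apply: val_inj; rewrite ea; exact: pair_eq (edge_card d) xd yd pq.
      by move=> e; rewrite e eqxx in da.
    + have : d = c by apply: val_inj; rewrite ec; apply: pair_eq (edge_card d) xd yd _; rewrite eq_sym.
      by move=> e; rewrite e eqxx in dc.
  - case/meet: (hK _ _ dK cK dc) => z zd; rewrite ec !inE => /orP [] /eqP ez; subst z.
    + have : d = a by apply: val_inj; rewrite ea; exact: pair_eq (edge_card d) zd xd pq.
      by move=> e; rewrite e eqxx in da.
    + have : d = b by apply: val_inj; rewrite eb; apply: pair_eq (edge_card d) xd zd _; rewrite eq_sym.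
      by move=> e; rewrite e eqxx in db.
have := leq_trans (subset_leq_card sub) (card3 a b c).
by rewrite leqNgt hcard.
Qed.

Definition star n (v : 'I_n) := [set e : edgeK n | v \in val e].

Lemma adj_share n (a b : edgeK n) v :
  v \in val a -> v \in val b -> a != b -> lineK_adj a b.
Proof.
move=> va vb ab; rewrite /lineK_adj ab /= -setI_eq0; apply/set0Pn; exists v.
by rewrite inE va vb.
Qed.

Lemma star_card n (e0 : edgeK n) (v : 'I_n) : #|star v| = n.-1.
Proof.
pose mk u := insubd e0 [set v; u].
have vmk u : u != v -> val (mk u) = [set v; u].
  move=> h; rewrite val_insubd /= cards2. by rewrite (eq_sym v u) h.
have -> : star v = mk @: [set~ v].
  apply/eqP; rewrite eqEsubset; apply/andP; split; apply/subsetP.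
  - move=> e; rewrite inE => ve; have [u uv eu] := two_other (edge_card e) ve.
    apply/imsetP; exists u; first by rewrite !inE.
    by apply: val_inj; rewrite vmk // eu.
  - move=> y /imsetP [u]; rewrite !inE => uv ->.
    by rewrite vmk // !inE eqxx.
rewrite card_in_imset ?cardsC1 ?card_ord //.
move=> u1 u2; rewrite !inE => h1 h2 /(congr1 val); rewrite !vmk // => E.
have : u1 \in [set v; u2] by rewrite -E !inE eqxx orbT.
by rewrite !inE (negbTE h1) => /eqP.
Qed.

Lemma inj_main n (hodd : odd n) f : is_endomorphism (@lineK_adj n) f -> injective f.
Proof.
move=> hf e1 e2 Hf; apply/eqP; apply: contraT => ne12.
have irr a : lineK_adj a a = false by rewrite /lineK_adj eqxx.
have nadj a b : f a = f b -> ~~ lineK_adj a b.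
  by move=> e; apply/negP => /hf; rewrite e irr.
have dis12 : [disjoint val e1 & val e2].
  by have := nadj _ _ Hf; rewrite /lineK_adj ne12 /= negbK.
have c4 : #|val e1 :|: val e2| = 4.
  rewrite cardsU !edge_card (_ : val e1 :&: val e2 = set0) ?cards0 //.
  by apply/eqP; rewrite setI_eq0.
have n5 : 4 < n.
  have := max_card (val e1 :|: val e2); rewrite c4 card_ord => h.
  rewrite ltn_neqAle h andbT; by apply: contraTneq hodd => <-.
have scard v : #|star v| = n.-1 := star_card e1 v.
have imstar v : exists w, f @: star v = star w.
  have inj : {in star v &, injective f}.
    move=> a b; rewrite !inE => va vb fab; apply/eqP; apply: contraT => ab.
    by have := nadj _ _ fab; rewrite (adj_share va vb ab).
  have [w hw] : exists w, forall e, e \in f @: star v -> w \in val e.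
    apply: clique_star; last first.
      by rewrite card_in_imset // scard -ltnS prednK // (leq_trans _ n5).
    move=> x y /imsetP [a va ->] /imsetP [b vb ->] fab.
    have ab : a != b by apply: contraNneq fab => ->.
    move: va vb; rewrite !inE => va vb.
    by have := hf _ _ (adj_share va vb ab); rewrite /lineK_adj => /andP [].
  exists w; apply/eqP; rewrite eqEcard; apply/andP; split.
    by apply/subsetP => e he; rewrite inE; exact: hw.
  by rewrite card_in_imset // !scard.
pose s v := odflt v [pick w | f @: star v == star w].
have hs v : f @: star v = star (s v).
  rewrite /s; case: pickP => [w /eqP //|H]; exfalso.
  by have [w hw] := imstar v; have := H w; rewrite hw eqxx.
have F1 v (e : edgeK n) : v \in val e -> s v \in val (f e).
  move=> ve; have : f e \in f @: star v by apply: imset_f; rewrite inE.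
  by rewrite hs inE.
have [u [v [uv suv]]] : exists u v, u != v /\ s u = s v.
  case: (boolP [exists u, exists v, (u != v) && (s u == s v)]).
    by case/existsP => u /existsP [v /andP [uv /eqP suv]]; exists u, v.
  rewrite negb_exists => /forallP H.
  have sinj : injective s.
    move=> a b sab; apply/eqP; apply: contraT => ab.
    by have := H a; rewrite negb_exists => /forallP /(_ b); rewrite ab sab eqxx.
  exfalso.
  have sub : s @: (val e1 :|: val e2) \subset val (f e1).
    apply/subsetP => _ /imsetP [x + ->]; rewrite inE => /orP [] hx.
      exact: F1.
    rewrite Hf; exact: F1.
  by have := subset_leq_card sub; rewrite (card_imset _ sinj) c4 edge_card.
have mkE a b : a != b -> exists e : edgeK n, val e = [set a; b].
  move=> ab; have h : #|[set a; b]| == 2 by rewrite cards2 ab.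
  by exists (exist _ [set a; b] h).
have sall x : s x = s u.
  case: (eqVneq x u) => [-> //|xu].
  case: (eqVneq x v) => [->|xv]; first by rewrite suv.
  apply/eqP; apply: contraT => sxw.
  have ux : u != x by rewrite eq_sym.
  have vx : v != x by rewrite eq_sym.
  have [p ep] := mkE u x ux.
  have [q eq_q] := mkE v x vx.
  have pq : p != q.
    apply/negP => /eqP pq.
    have : u \in val q by rewrite -pq ep !inE eqxx.
    by rewrite eq_q !inE (negbTE uv) (negbTE ux).
  have adjpq : lineK_adj p q.
    by apply: (@adj_share _ _ _ x) pq; rewrite ?ep ?eq_q !inE eqxx orbT.
  have : f p = f q.
    apply: val_inj.
    have h1 : s u \in val (f p) by apply: F1; rewrite ep !inE eqxx.
    have h2 : s x \in val (f p) by apply: F1; rewrite ep !inE eqxx orbT.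
    have h3 : s u \in val (f q) by rewrite suv; apply: F1; rewrite eq_q !inE eqxx.
    have h4 : s x \in val (f q) by apply: F1; rewrite eq_q !inE eqxx orbT.
    have wsx : s u != s x by rewrite eq_sym.
    by rewrite (pair_eq (edge_card _) h1 h2 wsx) (pair_eq (edge_card _) h3 h4 wsx).
  by move=> fpq; have := hf _ _ adjpq; rewrite fpq irr.
have [a ae1] : exists a, a \in val e1 by apply/set0Pn; rewrite -card_gt0 edge_card.
have tS : f e1 \in star (s u) by rewrite -(sall a) inE; exact: F1.
have cov (x : 'I_n) : exists2 e : edgeK n, x \in val e & f e = f e1.
  have : f e1 \in f @: star x by rewrite hs sall.
  by case/imsetP => e; rewrite inE => xe ->; exists e.
pose P := [set val e | e in [set e | f e == f e1]].
have triv : trivIset P.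
  apply/trivIsetP => B1 B2 /imsetP [b1 + ->] /imsetP [b2 + ->]; rewrite !inE => /eqP h1 /eqP h2 neq.
  have b12 : b1 != b2 by apply: contraNneq neq => ->.
  by have := nadj b1 b2 (etrans h1 (esym h2)); rewrite /lineK_adj b12 /= negbK.
have covT : cover P = [set: 'I_n].
  apply/eqP; rewrite eqEsubset subsetT /=; apply/subsetP => x _.
  have [e xe fe] := cov x; apply/bigcupP; exists (val e) => //.
  by apply: imset_f; rewrite inE fe.
move: triv; rewrite /trivIset covT cardsT card_ord.
rewrite (eq_bigr (fun _ => 2)); last first.
  by move=> B /imsetP [e _ ->]; exact: edge_card.
rewrite sum_nat_const => /eqP hn.
by move: hodd; rewrite -hn oddM andbF.
Qed.

Theorem mainTheorem7 (m : nat) (hm : 0 < m) :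
  is_core (@lineK_adj (2 * m + 1)).
Proof.
move=> f hf.
have ho : odd (2 * m + 1) by rewrite oddD oddM.
exact: endo_inj_auto hf (inj_main ho hf).
Qed.
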